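(* Consider $n$ birds in $\mathbb{R}^d$ evolving noise-free by $x(t)=x(t-1)+v(t)$, $v(t+1)=(P\otimes I_d)v(t)$, with fixed connected flocking network $G$ and fixed $P=I_n-CL$, where the coordinates of $x(0)$ and $v(1)$ are rationals over $\mathfrak{p}$ bits. Let $\pi=(\mathrm{tr}\,C^{-1})^{-1}C^{-1}\mathbf{1}$, $\Gamma=\lim_{t\to\infty}\bigl(-\mathbf{1}\pi^Tt+\sum_{s=0}^{t-1}P^s\bigr)$ and $x^r=((I_n-\mathbf{1}\pi^T)\otimes I_d)x(0)+(\Gamma\otimes I_d)v(1)$. Then the elements of $\Gamma$ are CD-rationals over $O(n\log n)$ bits and the coordinates of $x^r$ are CD-rationals over $O(n\log n+\mathfrak{p}n)$ bits.
   Context: $G$ is a connected undirected graph without self-loops on $n$ vertices with degrees $d_i$ and Laplacian $L$; $C=\mathrm{diag}(c_1,\dots,c_n)$ with positive rationals $c_i$ of $O(\log n)$ bits and $c_id_i<1$. A set of numbers is CD-rational over $k$ bits if they can be written as $p_i/q$ with a common denominator $q$, all integers involved having $O(k)$ bits. *)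

(* Defs.v *)
From HB Require Import structures.
From mathcomp Require Import all_boot all_order all_algebra.
From mathcomp Require Import all_classical all_reals topology normedtype sequences.
Set Implicit Arguments. Unset Strict Implicit. Unset Printing Implicit Defensive.
Import Order.TTheory GRing.Theory Num.Theory.
Local Open Scope ring_scope.

Definition fits (b : nat) (z : int) : bool := (absz z < 2 ^ b)%N.

Definition rat_bits (b : nat) (r : rat) : bool := fits b (numq r) && fits b (denq r).

(* A family y of reals is CD-rational over b bits: y_i = p_i / q with a common
   denominator q, all integers involved having at most b bits. *)
Definition CD_rational {R : numFieldType} {I : finType} (b : nat) (y : I -> R) : Prop :=
  exists q : int, q != 0 /\ fits b q /\
    forall i, exists p : int, fits b p /\ y i = p%:~R / q%:~R.

Definition deg {n : nat} (e : rel 'I_n) (i : 'I_n) : nat := #|[set j | e i j]|.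

Definition laplacian (R : ringType) {n : nat} (e : rel 'I_n) : 'M[R]_n :=
  \matrix_(i, j) (if i == j then (deg e i)%:R else if e i j then -1 else 0).

Definition Cmat (R : realType) {n : nat} (c : 'I_n -> rat) : 'M[R]_n :=
  diag_mx (\row_i ratr (c i)).

Definition Pmat (R : realType) {n : nat} (e : rel 'I_n) (c : 'I_n -> rat) : 'M[R]_n :=
  1%:M - Cmat R c *m laplacian R e.

Definition mxpow {R : ringType} {n : nat} (A : 'M[R]_n) (k : nat) : 'M[R]_n :=
  iter k (mulmx A) 1%:M.

Definition pivec (R : realType) {n : nat} (c : 'I_n -> rat) : 'cV[R]_n :=
  (\tr (invmx (Cmat R c)))^-1 *: (invmx (Cmat R c) *m const_mx 1).

Definition onepiT (R : realType) {n : nat} (c : 'I_n -> rat) : 'M[R]_n :=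
  const_mx 1 *m (pivec R c)^T.

Definition Gamma_partial (R : realType) {n : nat} (e : rel 'I_n) (c : 'I_n -> rat)
  (t : nat) : 'M[R]_n :=
  - (t%:R *: onepiT R c) + \sum_(s < t) mxpow (Pmat R e c) s.

(* x^r = ((I - 1 pi^T) (x) I_d) x(0) + (Gamma (x) I_d) v(1), with positions stored
   as n x d matrices (row i = bird i), so (A (x) I_d) acts as left multiplication by A. *)
Definition xr (R : realType) {n d : nat} (c : 'I_n -> rat) (Gamma : 'M[R]_n)
  (X0 V1 : 'M[rat]_(n, d)) : 'M[R]_(n, d) :=
  (1%:M - onepiT R c) *m map_mx ratr X0 + Gamma *m map_mx ratr V1.

(* Main.v *)
Require Import Defs.
From HB Require Import structures.
From mathcomp Require Import all_boot all_order all_algebra.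
From mathcomp Require Import all_classical all_reals topology normedtype sequences.
Import Order.TTheory GRing.Theory Num.Theory.
Import numFieldNormedType.Exports.
Local Open Scope ring_scope.
Local Open Scope classical_set_scope.
From mathcomp Require Import ring lra zify all_fingroup.
Set Implicit Arguments. Unset Strict Implicit.

Definition app (R : ringType) n (Q : 'M[R]_n) (y : 'I_n -> R) := fun i => \sum_j Q i j * y j.

Lemma mxpowS (R : ringType) n (A : 'M[R]_n) k : mxpow A k.+1 = A *m mxpow A k.
Proof. by []. Qed.

Lemma mxpowD (R : ringType) n (A : 'M[R]_n) k l : mxpow A (k + l) = mxpow A k *m mxpow A l.
Proof.
elim: k => [|k IH]; first by rewrite add0n /= mul1mx.
by rewrite addSn mxpowS IH mulmxA.
Qed.

Lemma app_mul (R : comRingType) n (A B : 'M[R]_n) y i : app (A *m B) y i = app A (app B y) i.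
Proof.
rewrite /app. under eq_bigr => j _ do rewrite mxE mulr_suml.
rewrite exchange_big /=. apply: eq_bigr => l _. rewrite mulr_sumr. apply: eq_bigr => j _.
by rewrite mulrA.
Qed.

Lemma lemulr (R : numDomainType) (a b c : R) : 0 <= c -> a <= b -> a * c <= b * c.
Proof. by move=> c0 ab; rewrite ler_wpM2r. Qed.
Lemma lemull (R : numDomainType) (a b c : R) : 0 <= c -> a <= b -> c * a <= c * b.
Proof. by move=> c0 ab; rewrite ler_wpM2l. Qed.

Definition stoch (R : numDomainType) n (Q : 'M[R]_n) :=
  (forall i j, 0 <= Q i j) /\ (forall i, \sum_j Q i j = 1).

Lemma sum_delta (R : ringType) n (i : 'I_n) (F : 'I_n -> R) :
  \sum_j (1%:M : 'M[R]_n) i j * F j = F i.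
Proof.
rewrite (bigD1 i) //= big1 ?addr0 ?mxE ?eqxx ?mul1r // => j /negbTE.
by rewrite mxE eq_sym => ->; rewrite mul0r.
Qed.

Lemma sum_delta' (R : ringType) n (j : 'I_n) (F : 'I_n -> R) :
  \sum_i F i * (1%:M : 'M[R]_n) i j = F j.
Proof.
rewrite (bigD1 j) //= big1 ?addr0 ?mxE ?eqxx ?mulr1 // => i /negbTE.
by rewrite mxE => ->; rewrite mulr0.
Qed.

Lemma stoch1 (R : numDomainType) n : stoch (1%:M : 'M[R]_n).
Proof.
split=> [i j|i]; first by rewrite mxE; case: (i == j).
transitivity (\sum_j (1%:M : 'M[R]_n) i j * 1).
  by apply: eq_bigr => j _; rewrite mulr1.
exact: (sum_delta i (fun _ => 1)).
Qed.

Lemma stochM (R : numDomainType) n (A B : 'M[R]_n) : stoch A -> stoch B -> stoch (A *m B).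
Proof.
move=> [A0 A1] [B0 B1]; split=> [i j|i].
  rewrite mxE; apply: sumr_ge0 => l _; exact: mulr_ge0.
under eq_bigr => j _ do rewrite mxE.
rewrite exchange_big /=. under eq_bigr => l _ do rewrite -mulr_sumr B1 mulr1. exact: A1.
Qed.

Lemma stoch_pow (R : numDomainType) n (A : 'M[R]_n) k : stoch A -> stoch (mxpow A k).
Proof. move=> sA; elim: k => [|k IH]; [exact: stoch1 | exact: stochM]. Qed.

Lemma ler_sum_single (R : numDomainType) (I : finType) (F : I -> R) i :
  (forall j, 0 <= F j) -> F i <= \sum_j F j.
Proof. move=> F0; rewrite (bigD1 i) //= lerDl; apply: sumr_ge0 => j _; exact: F0. Qed.

Lemma stoch_le1 (R : numDomainType) n (Q : 'M[R]_n) i j : stoch Q -> Q i j <= 1.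
Proof. move=> [Q0 Q1]; rewrite -(Q1 i); exact: ler_sum_single. Qed.

Lemma doeblin (R : realFieldType) n (Q : 'M[R]_n) (j0 : 'I_n) (d m M : R) (y : 'I_n -> R) :
  stoch Q -> (forall i, d <= Q i j0) -> 0 <= d -> (forall j, m <= y j <= M) ->
  forall i, m + d * (y j0 - m) <= app Q y i <= M - d * (M - y j0).
Proof.
move=> [Q0 Q1] hd d0 hy i; apply/andP; split.
- have -> : app Q y i = m + \sum_j Q i j * (y j - m).
    rewrite /app. under [X in _ = _ + X]eq_bigr => j _ do rewrite mulrBr.
    by rewrite sumrB -mulr_suml Q1 mul1r addrC subrK.
  rewrite lerD2l; apply: (@le_trans _ _ (Q i j0 * (y j0 - m))); last first.
    apply: (@ler_sum_single _ _ (fun j => Q i j * (y j - m))).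
    by move=> j /=; apply: mulr_ge0 => //; rewrite subr_ge0; case/andP: (hy j).
  by apply: (lemulr _ (hd i)); rewrite subr_ge0; case/andP: (hy j0).
- have -> : app Q y i = M - \sum_j Q i j * (M - y j).
    rewrite /app. under [X in _ = _ - X]eq_bigr => j _ do rewrite mulrBr.
    by rewrite sumrB -mulr_suml Q1 mul1r opprB addrC subrK.
  rewrite lerD2l lerN2; apply: (@le_trans _ _ (Q i j0 * (M - y j0))); last first.
    apply: (@ler_sum_single _ _ (fun j => Q i j * (M - y j))).
    by move=> j /=; apply: mulr_ge0 => //; rewrite subr_ge0; case/andP: (hy j).
  by apply: (lemulr _ (hd i)); rewrite subr_ge0; case/andP: (hy j0).
Qed.

Lemma iter_bound (R : realFieldType) n (Q : 'M[R]_n) (N : nat) (j0 : 'I_n) (d m0 M0 : R)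
   (y : 'I_n -> R) :
  stoch Q -> (forall i, d <= mxpow Q N i j0) -> 0 <= d -> (forall j, m0 <= y j <= M0) ->
  forall k t, (N * k <= t)%N -> exists m M, (forall i, m <= app (mxpow Q t) y i <= M) /\
     M - m <= (1 - d) ^+ k * (M0 - m0).
Proof.
move=> sQ hd d0 hy; elim=> [|k IH] t ht.
  exists m0, M0; split; last by rewrite expr0 mul1r.
  move=> i; have := @doeblin R n (mxpow Q t) j0 0 m0 M0 y (stoch_pow t sQ).
  move=> /(_ _ (lexx 0) hy i); rewrite !mul0r addr0 subr0; apply.
  by move=> i'; case: (stoch_pow t sQ) => H _; exact: H.
have hNt : (N <= t)%N by lia.
have [m [M [hmM hw]]] := IH (t - N)%N ltac:(lia).
have -> : t = (N + (t - N))%N by lia.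
have d1 : d <= 1 by apply: le_trans (hd j0) _; apply: stoch_le1; exact: stoch_pow.
set z := app (mxpow Q (t - N)) y.
exists (m + d * (z j0 - m)), (M - d * (M - z j0)); split.
  move=> i; rewrite mxpowD app_mul.
  exact: (@doeblin R n (mxpow Q N) j0 d m M z (stoch_pow N sQ) hd d0 hmM).
have -> : M - d * (M - z j0) - (m + d * (z j0 - m)) = (1 - d) * (M - m) by ring.
rewrite exprS -mulrA; apply: lemull => //; lra.
Qed.

Lemma pi_pow (R : ringType) n (Q : 'M[R]_n) (pi : 'I_n -> R) :
  (forall j, \sum_i pi i * Q i j = pi j) -> forall t j, \sum_i pi i * mxpow Q t i j = pi j.
Proof.
move=> hpi; elim=> [|t IH] j; first exact: sum_delta'.
rewrite mxpowS. under eq_bigr => i _ do rewrite mxE mulr_sumr.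
rewrite exchange_big /=. rewrite -[RHS]IH. apply: eq_bigr => l _.
by rewrite -hpi mulr_suml; apply: eq_bigr => i _; rewrite mulrA.
Qed.

Lemma stoch_cvg (R : realType) n (Q : 'M[R]_n) (pi : 'I_n -> R) (N : nat) (j0 : 'I_n) (d : R) :
  stoch Q -> (forall j, 0 <= pi j) -> \sum_j pi j = 1 -> (forall j, \sum_i pi i * Q i j = pi j) ->
  0 < d -> (forall i, d <= mxpow Q N i j0) ->
  forall y i, (fun t => app (mxpow Q t) y i) @ \oo --> \sum_j pi j * y j.
Proof.
move=> sQ pi0 pi1 hpi d0 hd y i.
have d1 : d <= 1 by apply: le_trans (hd j0) _; apply: stoch_le1; exact: stoch_pow.
set S := \sum_j `|y j|.
have S0 : 0 <= S by apply: sumr_ge0 => j _.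
have hy : forall j, - S <= y j <= S.
  by move=> j; rewrite -ler_norml; apply: (@ler_sum_single _ _ (fun j => `|y j|)).
have inv : forall t, \sum_j pi j * app (mxpow Q t) y j = \sum_j pi j * y j.
  move=> t; rewrite /app. under eq_bigr => j _ do rewrite mulr_sumr.
  rewrite exchange_big /=; apply: eq_bigr => l _.
  by rewrite -(pi_pow hpi t l) mulr_suml; apply: eq_bigr => j _; rewrite mulrA.
apply/cvgrPdist_le => eps eps0.
have q0 : 0 < 2 * S + 1 by lra.
have hz : `|1 - d| < 1 by rewrite ger0_norm; lra.
have := cvg_expr hz; move/cvgrPdist_le/(_ (eps / (2 * S + 1))).
rewrite divr_gt0 // => /(_ isT) [k _ /(_ k (leqnn k))] /=.
rewrite sub0r normrN ger0_norm ?exprn_ge0 ?subr_ge0 // => hk.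
exists (N * k)%N => // t /= ht.
have [m [M [hmM hw]]] := @iter_bound R n Q N j0 d (- S) S y sQ hd (ltW d0) hy k t ht.
set z := app (mxpow Q t) y in hmM hw *.
have hl : m <= \sum_j pi j * z j <= M.
  have e1 : \sum_j pi j * m = m by rewrite -mulr_suml pi1 mul1r.
  have e2 : \sum_j pi j * M = M by rewrite -mulr_suml pi1 mul1r.
  apply/andP; split.
    by rewrite -[X in X <= _]e1; apply: ler_sum => j _; apply: lemull => //; case/andP: (hmM j).
  by rewrite -[X in _ <= X]e2; apply: ler_sum => j _; apply: lemull => //; case/andP: (hmM j).
rewrite -(inv t) -/z.
apply: (@le_trans _ _ (M - m)).
  rewrite ler_norml; case/andP: hl => l1 l2; case/andP: (hmM i) => z1 z2; apply/andP; split; lra.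
apply: (le_trans hw).
rewrite ler_pdivlMr // in hk.
have : (1 - d) ^+ k * (S - - S) <= (1 - d) ^+ k * (2 * S + 1).
  apply: lemull; first by rewrite exprn_ge0 // subr_ge0.
  lra.
lra.
Qed.

Lemma pow_pos_path (R : numDomainType) n (Q : 'M[R]_n) (e : rel 'I_n) :
  stoch Q -> (forall i j, e i j -> 0 < Q i j) ->
  forall p i, path e i p -> 0 < mxpow Q (size p) i (last i p).
Proof.
move=> [Q0 Q1] he; elim=> [|x p IH] i /=; first by rewrite mxE eqxx.
case/andP=> eix hp; rewrite mxE.
apply: (@lt_le_trans _ _ (Q i x * mxpow Q (size p) x (last x p))).
  by apply: mulr_gt0; [exact: he | exact: IH].
apply: (@ler_sum_single _ _ (fun l => Q i l * mxpow Q (size p) l (last x p))).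
move=> l; apply: mulr_ge0 => //.
by case: (stoch_pow (size p) (conj Q0 Q1)) => H _; exact: H.
Qed.

Lemma pow_pos_mono (R : numDomainType) n (Q : 'M[R]_n) :
  stoch Q -> (forall i, 0 < Q i i) ->
  forall k l i j, 0 < mxpow Q k i j -> 0 < mxpow Q (l + k) i j.
Proof.
move=> sQ hd k; elim=> [|l IH] i j h //=.
rewrite mxE.
apply: (@lt_le_trans _ _ (Q i i * mxpow Q (l + k) i j)).
  by apply: mulr_gt0; [exact: hd | exact: IH].
apply: (@ler_sum_single _ _ (fun m => Q i m * mxpow Q (l + k) m j)).
have [Q0 _] := sQ.
move=> m; apply: mulr_ge0 => //.
by case: (stoch_pow (l + k) sQ) => H _; exact: H.
Qed.

Lemma pow_all_pos (R : numDomainType) n (Q : 'M[R]_n) (e : rel 'I_n) :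
  stoch Q -> (forall i, 0 < Q i i) -> (forall i j, e i j -> 0 < Q i j) ->
  (forall i j, connect e i j) -> exists N, forall i j, 0 < mxpow Q N i j.
Proof.
move=> sQ hd he hc.
have : forall ij : 'I_n * 'I_n, exists k, 0 < mxpow Q k ij.1 ij.2.
  move=> [i j] /=; case/connectP: (hc i j) => p hp ->; exists (size p).
  exact: (pow_pos_path sQ he).
case/choice => f hf.
exists (\sum_ij f ij)%N => i j.
rewrite -(subnK (_ : f (i,j) <= \sum_ij f ij)%N).
  by apply: (pow_pos_mono sQ hd); exact: (hf (i,j)).
by rewrite (bigD1 (i,j)) //= leq_addr.
Qed.

Lemma pos_min (R : numDomainType) n (F : 'I_n -> R) :
  (forall i, 0 < F i <= 1) -> exists2 d, 0 < d & forall i, d <= F i.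
Proof.
move=> hF; exists (\prod_i F i).
  by apply: prodr_gt0 => i _; case/andP: (hF i).
move=> i; rewrite (bigD1 i) //= -[X in _ <= X]mulr1; apply: lemull.
  by case/andP: (hF i) => /ltW.
apply: prodr_ile1 => j _; case/andP: (hF j) => /ltW -> ->; done.
Qed.


Lemma lap_entry (R : ringType) n (e : rel 'I_n) i j : irreflexive e ->
  laplacian R e i j = (i == j)%:R * (deg e i)%:R - (e i j)%:R.
Proof.
move=> irr; rewrite mxE; case: eqVneq => [->|_]; first by rewrite irr mul1r subr0.
by rewrite mul0r sub0r; case: (e i j) => //; rewrite oppr0.
Qed.

Lemma sum_e (R : ringType) n (e : rel 'I_n) i : \sum_j ((e i j)%:R : R) = (deg e i)%:R.
Proof.
rewrite /deg -sum1_card natr_sum [RHS]big_mkcond /=; apply: eq_bigr => j _.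
by rewrite inE; case: (e i j).
Qed.

Lemma lap_row0 (R : ringType) n (e : rel 'I_n) i : irreflexive e -> \sum_j laplacian R e i j = 0.
Proof.
move=> irr; under eq_bigr => j _ do rewrite lap_entry //.
rewrite sumrB sum_e.
have -> : \sum_j (i == j)%:R * (deg e i)%:R = (deg e i)%:R :> R.
  rewrite (bigD1 i) //= eqxx mul1r big1 ?addr0 // => j /negbTE.
  by rewrite eq_sym => ->; rewrite mul0r.
by rewrite subrr.
Qed.

Lemma lap_sym (R : ringType) n (e : rel 'I_n) i j : symmetric e -> laplacian R e i j = laplacian R e j i.
Proof. by move=> hs; rewrite !mxE eq_sym hs; case: eqVneq => [->|]. Qed.

Lemma lap_col0 (R : ringType) n (e : rel 'I_n) j : symmetric e -> irreflexive e ->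
   \sum_i laplacian R e i j = 0.
Proof. move=> hs irr; under eq_bigr => i _ do rewrite lap_sym //. exact: lap_row0. Qed.

Lemma Pmat_entry (R : realType) n (e : rel 'I_n) c i j :
  Pmat R e c i j = (i == j)%:R - ratr (c i) * laplacian R e i j.
Proof. by rewrite /Pmat /Cmat mxE mul_diag_mx !mxE. Qed.

Lemma ratr_pos (R : realType) (x : rat) : 0 < x -> 0 < (ratr x : R).
Proof. by move=> x0; rewrite -(rmorph0 (@ratr R)) ltr_rat. Qed.

Lemma pivec_entry (R : realType) n (c : 'I_n -> rat) j : (forall i, 0 < c i) ->
  pivec R c j 0 = (\sum_i (ratr (c i) : R)^-1)^-1 * (ratr (c j) : R)^-1.
Proof.
move=> c0.
set D := diag_mx (\row_i (ratr (c i) : R)^-1).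
have hC : Cmat R c *m D = 1%:M.
  apply/matrixP => i k; rewrite /Cmat mul_diag_mx !mxE.
  case: eqVneq => [->|]; rewrite ?mulr1n ?mulr0n ?mulr0 //.
  by rewrite divff // gt_eqF // ratr_pos.
have [Cu _] := mulmx1_unit hC.
have hinv : invmx (Cmat R c) = D.
  by rewrite -[invmx _]mulmx1 -hC mulmxA mulVmx ?mul1mx.
rewrite /pivec hinv mxE mxtrace_diag mul_diag_mx !mxE mulr1.
by congr (_ ^-1 * _); apply: eq_bigr => i _; rewrite mxE.
Qed.

Lemma onepiT_entry (R : realType) n (c : 'I_n -> rat) i j : onepiT R c i j = pivec R c j 0.
Proof. by rewrite /onepiT mxE big_ord1 !mxE mul1r. Qed.

Lemma sum_natdelta (R : ringType) n (j : 'I_n) (F : 'I_n -> R) :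
  \sum_i F i * ((i == j)%:R : R) = F j.
Proof.
rewrite (bigD1 j) //= eqxx mulr1 big1 ?addr0 // => i /negbTE ->; by rewrite mulr0.
Qed.

Lemma cdR (R : realType) n (e : rel 'I_n) (c : 'I_n -> rat) i :
  c i * (deg e i)%:R < 1 -> (ratr (c i) : R) * (deg e i)%:R < 1.
Proof. by move=> h; rewrite -(rmorph_nat (@ratr R)) -rmorphM -(rmorph1 (@ratr R)) ltr_rat. Qed.

Lemma P_diag (R : realType) n (e : rel 'I_n) (c : 'I_n -> rat) i : irreflexive e ->
  Pmat R e c i i = 1 - ratr (c i) * (deg e i)%:R.
Proof. by move=> irr; rewrite Pmat_entry lap_entry // eqxx irr mul1r subr0. Qed.

Lemma P_off (R : realType) n (e : rel 'I_n) (c : 'I_n -> rat) i j : irreflexive e -> i != j ->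
  Pmat R e c i j = ratr (c i) * (e i j)%:R.
Proof. by move=> irr /negbTE ne; rewrite Pmat_entry lap_entry // ne /=; ring. Qed.

Lemma P_stoch (R : realType) n (e : rel 'I_n) (c : 'I_n -> rat) :
  irreflexive e -> (forall i, 0 < c i) -> (forall i, c i * (deg e i)%:R < 1) ->
  stoch (Pmat R e c).
Proof.
move=> irr c0 hcd; split=> [i j|i].
  case: (eqVneq i j) => [<-|ne].
    by rewrite P_diag // subr_ge0 ltW // cdR.
  by rewrite P_off // mulr_ge0 // ?ltW ?ratr_pos.
under eq_bigr => j _ do rewrite Pmat_entry.
rewrite sumrB -mulr_sumr lap_row0 // mulr0 subr0.
rewrite (bigD1 i) //= eqxx big1 ?addr0 // => j /negbTE; rewrite eq_sym => ->; done.
Qed.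

Lemma P_diag_pos (R : realType) n (e : rel 'I_n) (c : 'I_n -> rat) i :
  irreflexive e -> (forall i, c i * (deg e i)%:R < 1) -> 0 < Pmat R e c i i.
Proof. by move=> irr hcd; rewrite P_diag // subr_gt0 cdR. Qed.

Lemma P_edge_pos (R : realType) n (e : rel 'I_n) (c : 'I_n -> rat) i j :
  irreflexive e -> (forall i, 0 < c i) -> e i j -> 0 < Pmat R e c i j.
Proof.
move=> irr c0 eij; have ne : i != j by apply: contraTneq eij => ->; rewrite irr.
by rewrite P_off // eij mulr1 ratr_pos.
Qed.

Definition sR (R : realType) n (c : 'I_n -> rat) : R := \sum_i (ratr (c i) : R)^-1.

Lemma sR_pos (R : realType) n (c : 'I_n -> rat) (i0 : 'I_n) : (forall i, 0 < c i) -> 0 < sR R c.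
Proof.
move=> c0; rewrite /sR (bigD1 i0) //=; apply: ltr_pwDl.
  by rewrite invr_gt0 ratr_pos.
by apply: sumr_ge0 => i _; rewrite invr_ge0 ltW // ratr_pos.
Qed.

Lemma pi_facts (R : realType) n (e : rel 'I_n) (c : 'I_n -> rat) (i0 : 'I_n) :
  symmetric e -> irreflexive e -> (forall i, 0 < c i) ->
  let pi := fun j => pivec R c j 0 in
  [/\ forall j, 0 <= pi j, \sum_j pi j = 1 & forall j, \sum_i pi i * Pmat R e c i j = pi j].
Proof.
move=> hs irr c0 pi.
have s0 := sR_pos R i0 c0.
have hpi : forall j, pi j = (sR R c)^-1 * (ratr (c j))^-1 by move=> j; exact: pivec_entry.
split.
- by move=> j; rewrite hpi mulr_ge0 // ?invr_ge0 ?ltW // ratr_pos.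
- under eq_bigr => j _ do rewrite hpi.
  by rewrite -mulr_sumr -/(sR R c) mulVf // gt_eqF.
- move=> j; under eq_bigr => i _ do rewrite Pmat_entry mulrBr.
  rewrite sumrB sum_natdelta.
  have -> : \sum_i pi i * (ratr (c i) * laplacian R e i j) = (sR R c)^-1 * \sum_i laplacian R e i j.
    rewrite mulr_sumr; apply: eq_bigr => i _; rewrite hpi mulrA -(mulrA _ _ (ratr (c i))).
    by rewrite mulVf ?mulr1 // gt_eqF // ratr_pos.
  by rewrite lap_col0 // mulr0 subr0.
Qed.

Lemma P_cvg (R : realType) n (e : rel 'I_n) (c : 'I_n -> rat) (i0 : 'I_n) :
  symmetric e -> irreflexive e -> (forall i j, connect e i j) ->
  (forall i, 0 < c i) -> (forall i, c i * (deg e i)%:R < 1) ->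
  forall y i, (fun t => app (mxpow (Pmat R e c) t) y i) @ \oo --> \sum_j pivec R c j 0 * y j.
Proof.
move=> hs irr hcon c0 hcd y i.
have sP := @P_stoch R n e c irr c0 hcd.
have [N hN] := pow_all_pos sP (fun i => @P_diag_pos R n e c i irr hcd) (fun i j => @P_edge_pos R n e c i j irr c0) hcon.
have [d d0 hd] := @pos_min R n (fun i => mxpow (Pmat R e c) N i i0) 
   (fun i => introT andP (conj (hN i i0) (stoch_le1 i i0 (stoch_pow N sP)))).
have [h1 h2 h3] := @pi_facts R n e c i0 hs irr c0.
exact: (stoch_cvg sP h1 h2 h3 d0 hd).
Qed.

Lemma cvg_const_eq (R : realType) (a b : R) : (fun t : nat => a) @ \oo --> b -> a = b.
Proof. move=> h; exact: (cvg_unique (@Rhausdorff R) (cvg_cst a) h). Qed.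

Lemma ker_const (R : realType) n (e : rel 'I_n) (c : 'I_n -> rat) (i0 : 'I_n) :
  symmetric e -> irreflexive e -> (forall i j, connect e i j) ->
  (forall i, 0 < c i) -> (forall i, c i * (deg e i)%:R < 1) ->
  forall y : 'I_n -> R, (forall k, \sum_i y i * laplacian R e i k = 0) ->
  forall k, y k = \sum_j pivec R c j 0 * y j.
Proof.
move=> hs irr hcon c0 hcd y hy k.
have hP : forall t, app (mxpow (Pmat R e c) t) y = y.
  elim=> [|t IH]; apply: funext => i.
    by rewrite /app sum_delta.
  rewrite mxpowS app_mul IH /app.
  under eq_bigr => j _ do rewrite Pmat_entry mulrBl.
  rewrite sumrB (eq_bigr (fun j => y j * ((j == i)%:R))); last first.
    by move=> j _; rewrite mulrC eq_sym.
  rewrite sum_natdelta.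
  have -> : \sum_j ratr (c i) * laplacian R e i j * y j = ratr (c i) * \sum_j y j * laplacian R e j i.
    rewrite mulr_sumr; apply: eq_bigr => j _; rewrite lap_sym // -mulrA (mulrC (laplacian _ _ _ _)); done.
  by rewrite hy mulr0 subr0.
have := @P_cvg R n e c i0 hs irr hcon c0 hcd y k.
under eq_fun => t do rewrite hP.
exact: cvg_const_eq.
Qed.


Definition Lt n (e : rel 'I_n) (c : 'I_n -> rat) : 'M[int]_n :=
  \matrix_(i, j) (numq (c i) * laplacian int e i j * numq (c j)).
Definition vcol n (c : 'I_n -> rat) : 'M[int]_(n, 1) := \col_i denq (c i).
Definition vrow n (c : 'I_n -> rat) : 'M[int]_(1, n) := \row_j denq (c j).
Definition Bm n (e : rel 'I_n) (c : 'I_n -> rat) : 'M[int]_(n + 1) :=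
  block_mx (Lt e c) (vcol c) (vrow c) 0.
Definition A11 n (e : rel 'I_n) (c : 'I_n -> rat) := ulsubmx (\adj (Bm e c)).
Definition A21 n (e : rel 'I_n) (c : 'I_n -> rat) := dlsubmx (\adj (Bm e c)).

Lemma block_eqs n (e : rel 'I_n) (c : 'I_n -> rat) :
  Lt e c *m A11 e c + vcol c *m A21 e c = (\det (Bm e c))%:M /\ vrow c *m A11 e c = 0.
Proof.
have H := mul_mx_adj (Bm e c).
rewrite -[\adj _]submxK {1}/Bm mulmx_block (scalar_mx_block n 1) in H.
case/eq_block_mx: H => h1 _ h3 _; split; first exact: h1.
by rewrite mul0mx addr0 in h3.
Qed.

Lemma lapZ (R : ringType) n (e : rel 'I_n) i j : ((laplacian int e i j)%:~R : R) = laplacian R e i j.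
Proof. by rewrite !mxE; case: (i == j); case: (e i j); rewrite ?rmorph_nat ?rmorphN ?rmorph1 ?rmorph0. Qed.

Lemma E1R (R : realType) n (e : rel 'I_n) (c : 'I_n -> rat) i j :
  \sum_k ((numq (c i))%:~R * laplacian R e i k * (numq (c k))%:~R * ((A11 e c k j)%:~R : R))
  + (denq (c i))%:~R * (A21 e c 0 j)%:~R = (\det (Bm e c))%:~R * (i == j)%:R.
Proof.
have [h1 _] := block_eqs e c.
have := congr1 (fun M : 'M[int]_n => ((M i j)%:~R : R)) h1.
rewrite /= !mxE big_ord1 !mxE rmorphD rmorph_sum /= rmorphM /=.
move=> H; transitivity ((\det (Bm e c) *+ (i == j))%:~R : R); last first.
  by case: (i == j); rewrite ?mulr1 ?mulr0 ?mulr0n ?mulr1n ?rmorph0.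
rewrite -H; congr (_ + _). apply: eq_bigr => k _. rewrite !mxE !rmorphM /=.
congr (_ * _ * _ * _); case: (i == k); case: (e i k);
  by rewrite ?rmorph_nat ?rmorphN ?rmorph1 ?rmorph0.
Qed.

Lemma E2R (R : realType) n (e : rel 'I_n) (c : 'I_n -> rat) j :
  \sum_k ((denq (c k))%:~R * ((A11 e c k j)%:~R : R)) = 0.
Proof.
have [_ h2] := block_eqs e c.
have H0 : ((vrow c *m A11 e c) 0 j)%:~R = 0 :> R by rewrite h2 mxE rmorph0.
apply: (etrans _ H0).
rewrite [in RHS]mxE rmorph_sum; apply: eq_bigr => k _.
by rewrite rmorphM /= [vrow c 0 k]mxE.
Qed.

Definition Gam (R : realType) n (e : rel 'I_n) (c : 'I_n -> rat) : 'M[R]_n :=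
  \matrix_(k, j) (((numq (c k) * denq (c j) * A11 e c k j)%:~R : R) / (\det (Bm e c))%:~R).

Definition lam (R : realType) n (e : rel 'I_n) (c : 'I_n -> rat) j : R :=
  ((denq (c j) * A21 e c 0 j)%:~R : R) / (\det (Bm e c))%:~R.

Lemma G1 (R : realType) n (e : rel 'I_n) (c : 'I_n -> rat) i j :
  (forall i, 0 < c i) -> \det (Bm e c) != 0 ->
  ratr (c i) * \sum_k laplacian R e i k * Gam R e c k j = (i == j)%:R - lam R e c j.
Proof.
move=> c0 b0.
have bR : ((\det (Bm e c))%:~R : R) != 0 by rewrite intr_eq0.
have uR : ((numq (c i))%:~R : R) != 0 by rewrite intr_eq0 gt_eqF // numq_gt0.
have vR : forall k, ((denq (c k))%:~R : R) != 0 by move=> k; rewrite intr_eq0 gt_eqF // denq_gt0.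
have H := E1R R e c i j.
set S := \sum_k _ in H.
have -> : \sum_k laplacian R e i k * Gam R e c k j =
    S * (denq (c j))%:~R / ((numq (c i))%:~R * (\det (Bm e c))%:~R).
  rewrite /S !mulr_suml; apply: eq_bigr => k _; rewrite [Gam _ _ _ _ _]mxE !rmorphM /=.
  by field; rewrite uR bR.
have -> : S = (\det (Bm e c))%:~R * (i == j)%:R - (denq (c i))%:~R * (A21 e c 0 j)%:~R.
  by rewrite -H addrK.
rewrite /lam /ratr rmorphM /=.
case: eqVneq => [<-|_] /=.
  by field; rewrite uR bR vR.
by field; rewrite uR bR vR.
Qed.

Lemma G2 (R : realType) n (e : rel 'I_n) (c : 'I_n -> rat) j :
  (forall i, 0 < c i) -> \det (Bm e c) != 0 ->
  \sum_k (ratr (c k) : R)^-1 * Gam R e c k j = 0.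
Proof.
move=> c0 b0.
have uR : forall k, ((numq (c k))%:~R : R) != 0 by move=> k; rewrite intr_eq0 gt_eqF // numq_gt0.
have bR : ((\det (Bm e c))%:~R : R) != 0 by rewrite intr_eq0.
transitivity ((denq (c j))%:~R / (\det (Bm e c))%:~R * \sum_k ((denq (c k))%:~R * ((A11 e c k j)%:~R : R))).
  rewrite mulr_sumr; apply: eq_bigr => k _; rewrite mxE !rmorphM /= /ratr.
  by field; rewrite uR bR /= intr_eq0 gt_eqF // denq_gt0.
by rewrite E2R mulr0.
Qed.

Lemma G3 (R : realType) n (e : rel 'I_n) (c : 'I_n -> rat) (i0 : 'I_n) j :
  symmetric e -> irreflexive e -> (forall i, 0 < c i) -> \det (Bm e c) != 0 ->
  lam R e c j = pivec R c j 0.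
Proof.
move=> hs irr c0 b0.
have s0 := sR_pos R i0 c0.
have H : \sum_i (ratr (c i) : R)^-1 * (ratr (c i) * \sum_k laplacian R e i k * Gam R e c k j) = 0.
  transitivity (\sum_i \sum_k laplacian R e i k * Gam R e c k j).
    by apply: eq_bigr => i _; rewrite mulrA mulVf ?mul1r // gt_eqF // ratr_pos.
  rewrite exchange_big /=; apply: big1 => k _.
  by rewrite -mulr_suml lap_col0 // mul0r.
rewrite (eq_bigr (fun i => (ratr (c i) : R)^-1 * (i == j)%:R - (ratr (c i))^-1 * lam R e c j)) in H; last first.
  by move=> i _; rewrite (@G1 R n e c i j c0 b0) mulrBr.
rewrite sumrB sum_natdelta -mulr_suml -/(sR R c) in H.
rewrite pivec_entry //.
have hc : (ratr (c j) : R) != 0 by rewrite gt_eqF // ratr_pos.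
have -> : lam R e c j = (sR R c)^-1 * (sR R c * lam R e c j).
  by rewrite mulrA mulVf ?mul1r // gt_eqF.
by move/eqP: H; rewrite subr_eq0 => /eqP <-.
Qed.

Lemma IP_Gam (R : realType) n (e : rel 'I_n) (c : 'I_n -> rat) (i0 : 'I_n) :
  symmetric e -> irreflexive e -> (forall i, 0 < c i) -> \det (Bm e c) != 0 ->
  (1%:M - Pmat R e c) *m Gam R e c = 1%:M - onepiT R c.
Proof.
move=> hs irr c0 b0; apply/matrixP => i j.
rewrite [RHS]mxE. rewrite [X in _ = _ + X]mxE onepiT_entry -(@G3 R n e c i0 j hs irr c0 b0).
rewrite [1%:M i j]mxE -(@G1 R n e c i j c0 b0) [LHS]mxE mulr_sumr.
apply: eq_bigr => k _.
rewrite [X in X * _ = _]mxE [X in (_ + X) * _ = _]mxE Pmat_entry [1%:M i k]mxE.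
by rewrite opprB addrC subrK mulrA.
Qed.

Lemma pow_const1 (R : realType) n (e : rel 'I_n) (c : 'I_n -> rat) t :
  irreflexive e -> (forall i, 0 < c i) -> (forall i, c i * (deg e i)%:R < 1) ->
  mxpow (Pmat R e c) t *m onepiT R c = onepiT R c.
Proof.
move=> irr c0 hcd.
have [_ h1] := stoch_pow t (@P_stoch R n e c irr c0 hcd).
rewrite /onepiT mulmxA; congr (_ *m _).
apply/matrixP => i k; rewrite !mxE.
by under eq_bigr => j _ do rewrite mxE mulr1.
Qed.

Lemma Gp_eq (R : realType) n (e : rel 'I_n) (c : 'I_n -> rat) (i0 : 'I_n) t :
  symmetric e -> irreflexive e -> (forall i, 0 < c i) -> (forall i, c i * (deg e i)%:R < 1) ->
  \det (Bm e c) != 0 ->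
  Gamma_partial R e c t = Gam R e c - mxpow (Pmat R e c) t *m Gam R e c.
Proof.
move=> hs irr c0 hcd b0.
elim: t => [|t IH].
  by rewrite /Gamma_partial big_ord0 scale0r oppr0 add0r mul1mx subrr.
have step : Gamma_partial R e c t.+1 = Gamma_partial R e c t + mxpow (Pmat R e c) t - onepiT R c.
  rewrite /Gamma_partial big_ord_recr /= -addn1 natrD scalerDl scale1r opprD.
  by rewrite -!addrA; congr (_ + _); rewrite addrC -addrA.
have hS : mxpow (Pmat R e c) t.+1 = mxpow (Pmat R e c) t *m Pmat R e c.
  by rewrite -addn1 mxpowD /= mulmx1.
rewrite step IH hS.
have key := @IP_Gam R n e c i0 hs irr c0 b0.
have : mxpow (Pmat R e c) t *m ((1%:M - Pmat R e c) *m Gam R e c) =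
       mxpow (Pmat R e c) t - onepiT R c.
  by rewrite key mulmxBr mulmx1 (@pow_const1 R n e c t irr c0 hcd).
rewrite mulmxA mulmxBr mulmx1 mulmxBl -mulmxA => H.
by rewrite -addrA -H addrA subrK.
Qed.

Lemma Gam_lim (R : realType) n (e : rel 'I_n) (c : 'I_n -> rat) (i0 : 'I_n) :
  symmetric e -> irreflexive e -> (forall i j, connect e i j) ->
  (forall i, 0 < c i) -> (forall i, c i * (deg e i)%:R < 1) ->
  \det (Bm e c) != 0 ->
  forall i j, (fun t : nat => Gamma_partial R e c t i j) @ \oo --> Gam R e c i j.
Proof.
move=> hs irr hcon c0 hcd b0 i j.
have h := @P_cvg R n e c i0 hs irr hcon c0 hcd (fun k => Gam R e c k j) i.
have h0 : \sum_k pivec R c k 0 * Gam R e c k j = 0.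
  transitivity ((sR R c)^-1 * \sum_k (ratr (c k) : R)^-1 * Gam R e c k j).
    rewrite mulr_sumr; apply: eq_bigr => k _; by rewrite pivec_entry // mulrA.
  by rewrite (@G2 R n e c j c0 b0) mulr0.
rewrite h0 in h.
have h2 := cvgB (cvg_cst (Gam R e c i j)) h.
rewrite subr0 in h2.
have -> : (fun t => Gamma_partial R e c t i j) =
          (fun t => Gam R e c i j - app (mxpow (Pmat R e c) t) (fun k => Gam R e c k j) i).
  apply: funext => t; rewrite (@Gp_eq R n e c i0 t hs irr c0 hcd b0).
  by rewrite [LHS]mxE [X in _ + X]mxE [X in _ - X]mxE.
exact: h2.
Qed.

Lemma beta_neq0 (R : realType) n (e : rel 'I_n) (c : 'I_n -> rat) (i0 : 'I_n) :
  symmetric e -> irreflexive e -> (forall i j, connect e i j) ->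
  (forall i, 0 < c i) -> (forall i, c i * (deg e i)%:R < 1) ->
  \det (Bm e c) != 0.
Proof.
move=> hs irr hcon c0 hcd; apply/negP => /eqP b0.
have : \det (map_mx (fun z : int => (z%:~R : R)) (Bm e c)) == 0.
  by rewrite det_map_mx b0 rmorph0.
case/det0P => x x0 hx.
rewrite /Bm map_block_mx map_mx0 -[x]hsubmxK mul_row_block -row_mx0 in hx.
case/eq_row_mx: hx => hx1 hx2.
set x1 := lsubmx x in hx1 hx2.
set mu := rsubmx x 0 0.
have uR : forall k, ((numq (c k))%:~R : R) != 0 by move=> k; rewrite intr_eq0 gt_eqF // numq_gt0.
have vR : forall k, ((denq (c k))%:~R : R) != 0 by move=> k; rewrite intr_eq0 gt_eqF // denq_gt0.
set y := fun i => x1 0 i * (numq (c i))%:~R.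
have hy : forall k, \sum_i y i * laplacian R e i k = - mu * (ratr (c k))^-1.
  move=> k; have := congr1 (fun M : 'M[R]_(1, n) => M 0 k) hx1.
  rewrite /= [X in _ = X -> _]mxE [X in X = _ -> _]mxE [X in _ + X = _ -> _]mxE big_ord1.
  have e1 : (map_mx (fun z : int => (z%:~R : R)) (vrow c)) 0 k = (denq (c k))%:~R by rewrite !mxE.
  have e2 : (x1 *m map_mx (fun z : int => (z%:~R : R)) (Lt e c)) 0 k =
      \sum_i y i * laplacian R e i k * (numq (c k))%:~R.
    rewrite mxE; apply: eq_bigr => i _.
    rewrite [map_mx _ _ i k]mxE [Lt e c i k]mxE !rmorphM /= lapZ /y; ring.
  rewrite e1 e2 => H.
  have H' : \sum_i y i * laplacian R e i k * (numq (c k))%:~R = - mu * (denq (c k))%:~R.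
    by apply/eqP; rewrite -subr_eq0 mulNr opprK H.
  rewrite -mulr_suml in H'.
  apply: (mulIf (uR k)); rewrite H' /ratr invf_div; field; exact: uR.
have mu0 : mu = 0.
  have s0 := sR_pos R i0 c0.
  have : \sum_k \sum_i y i * laplacian R e i k = - mu * sR R c.
    rewrite /sR mulr_sumr; apply: eq_bigr => k _; exact: hy.
  rewrite exchange_big /=.
  rewrite big1 => [/esym/eqP|i _]; last by rewrite -mulr_sumr lap_row0 // mulr0.
  by rewrite mulf_eq0 oppr_eq0 (gt_eqF s0) orbF => /eqP.
have hy0 : forall k, \sum_i y i * laplacian R e i k = 0 by move=> k; rewrite hy mu0 oppr0 mul0r.
have hc := @ker_const R n e c i0 hs irr hcon c0 hcd y hy0.
set l := \sum_j pivec R c j 0 * y j in hc.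
have hx2' : \sum_i x1 0 i * (denq (c i))%:~R = 0.
  have := congr1 (fun M : 'M[R]_(1, 1) => M 0 0) hx2.
  rewrite /= [X in _ = X -> _]mxE [X in X = _ -> _]mxE [X in _ + X = _ -> _]mxE big_ord1.
  rewrite [X in _ + _ * X = _ -> _]mxE mulr0 addr0 mxE => H; apply: (etrans _ H).
  by apply: eq_bigr => i _; rewrite !mxE.
have l0 : l = 0.
  have s0 := sR_pos R i0 c0.
  have : l * sR R c = 0.
    rewrite -hx2' /sR mulr_sumr; apply: eq_bigr => i _.
    have : x1 0 i = l / (numq (c i))%:~R by rewrite -(hc i) /y mulfK.
    move=> ->; rewrite /ratr invf_div; field; exact: uR.
  by move/eqP; rewrite mulf_eq0 (gt_eqF s0) orbF => /eqP.
have x10 : x1 = 0.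
  apply/matrixP => a i; rewrite (ord1 a) [RHS]mxE.
  have : y i = 0 by rewrite hc l0.
  by rewrite /y => /eqP; rewrite mulf_eq0 (negbTE (uR i)) orbF => /eqP.
have x20 : rsubmx x = 0.
  by apply/matrixP => a b; rewrite (ord1 a) (ord1 b) [RHS]mxE.
by move/negP: x0; apply; rewrite -[x]hsubmxK -/x1 x10 x20 row_mx0.
Qed.


Lemma abszD_le (x y : int) : (absz (x + y)%R <= absz x + absz y)%N.
Proof. by rewrite -lez_nat PoszD !abszE ler_normD. Qed.

Lemma absz_sum_le (I : finType) (F : I -> int) : (absz (\sum_i F i)%R <= \sum_i absz (F i))%N.
Proof.
rewrite -lez_nat abszE -natz natr_sum.
under [X in _ <= X]eq_bigr => i _ do rewrite natz abszE.
exact: ler_norm_sum.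
Qed.

Lemma det_bound m (A : 'M[int]_m) (b : int) :
  0 <= b -> (forall i j, `|A i j| <= b) -> `|\det A| <= (m`!)%:R * b ^+ m.
Proof.
move=> b0 hA; rewrite /determinant.
apply: (le_trans (ler_norm_sum _ _ _)).
have -> : (m`!)%:R * b ^+ m = \sum_(s : 'S_m) b ^+ m.
  by rewrite sumr_const mulrC mulr_natr; congr (_ *+ _); rewrite -card_Sn.
apply: ler_sum => s _.
rewrite normrM normr_sign mul1r normr_prod.
have -> : b ^+ m = \prod_(i < m) b by rewrite prodr_const card_ord.
by apply: ler_prod => i _; rewrite normr_ge0 hA.
Qed.

Lemma det_bound_nat m (A : 'M[int]_m) (B : nat) :
  (forall i j, absz (A i j) <= B)%N -> (absz (\det A) <= m`! * B ^ m)%N.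
Proof.
move=> hA; rewrite -lez_nat abszE PoszM -!natz natrX.
apply: det_bound => // i j; rewrite -abszE natz lez_nat; exact: hA.
Qed.

Lemma adj_bound m (A : 'M[int]_m) (B : nat) : (0 < B)%N ->
  (forall i j, absz (A i j) <= B)%N -> forall i j, (absz (\adj A i j) <= m`! * B ^ m)%N.
Proof.
move=> B0 hA i j; rewrite mxE /cofactor abszM absz_sign mul1n.
apply: (leq_trans (det_bound_nat (B := B) _)).
  by move=> k l; rewrite !mxE; exact: hA.
by apply: leq_mul; [apply: leq_fact; exact: leq_pred | apply: leq_pexp2l => //; exact: leq_pred].
Qed.

Lemma fact_le_pow m : (m`! <= m ^ m)%N.
Proof.
elim: m => // m IH; rewrite factS expnS leq_mul //.
apply: (leq_trans IH); case: m {IH} => // m; rewrite leq_exp2r //.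
Qed.

Lemma deg_le n (e : rel 'I_n) i : (deg e i <= n)%N.
Proof. by rewrite /deg; apply: (leq_trans (max_card _)); rewrite card_ord. Qed.

Lemma lap_absz n (e : rel 'I_n) i j : (absz (laplacian int e i j) <= n)%N.
Proof.
rewrite mxE; case: (i == j); first by rewrite natz absz_nat deg_le.
by case: (e i j) => //=; exact: (leq_trans _ (ltn_ord i)).
Qed.

Lemma Bm_bound n (e : rel 'I_n) (c : 'I_n -> rat) (A T : nat) :
  (forall i, rat_bits A (c i)) -> (n <= 2 ^ T)%N ->
  forall i j, (absz (Bm e c i j) <= 2 ^ (A + T + A))%N.
Proof.
move=> hc hn.
have hu : forall i, (absz (numq (c i)) <= 2 ^ A)%N by move=> i; case/andP: (hc i) => /ltnW.
have hv : forall i, (absz (denq (c i)) <= 2 ^ A)%N by move=> i; case/andP: (hc i) => _ /ltnW.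
have hv' : forall i, (absz (denq (c i)) <= 2 ^ (A + T + A))%N.
  by move=> i; apply: (leq_trans (hv i)); apply: leq_pexp2l => //; rewrite -addnA leq_addr.
move=> i j; rewrite -[i]splitK -[j]splitK.
case: (fintype.split i) => i'; case: (fintype.split j) => j';
  rewrite /Bm /unsplit ?block_mxEul ?block_mxEur ?block_mxEdl ?block_mxEdr ?mxE //.
have hl := lap_absz e i' j'; rewrite mxE in hl.
rewrite !abszM !expnD; apply: leq_mul; first apply: leq_mul.
- exact: hu.
- exact: (leq_trans hl hn).
- exact: hu.
Qed.


Lemma absz_prod_le (I : finType) (P : pred I) (F : I -> int) (B : nat) :
  (forall i, absz (F i) <= B)%N -> (absz (\prod_(i | P i) F i)%R <= B ^ #|P|)%N.
Proof.
move=> hF; rewrite -lez_nat abszE normr_prod -natz natrX -prodr_const.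
apply: ler_prod => i _; rewrite normr_ge0 /= natz -abszE lez_nat; exact: hF.
Qed.

Lemma prod_den_gt0 (I : finType) (P : pred I) (r : I -> rat) : 0 < \prod_(i | P i) denq (r i).
Proof. by apply: prodr_gt0 => i _; exact: denq_gt0. Qed.

Lemma ratr_common (R : realType) (I : finType) (r : I -> rat) (E : int) i :
  E != 0 ->
  (ratr (r i) : R) = ((numq (r i) * \prod_(j | j != i) denq (r j) * E)%:~R) /
                      ((\prod_j denq (r j)) * E)%:~R.
Proof.
move=> E0; rewrite [X in _ / (X * _)%:~R](bigD1 i) //= !rmorphM /= /ratr.
have h1 : ((denq (r i))%:~R : R) != 0 by rewrite intr_eq0 gt_eqF // denq_gt0.
have h2 : ((\prod_(j | j != i) denq (r j))%:~R : R) != 0.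
  by rewrite intr_eq0 gt_eqF // prod_den_gt0.
have h3 : (E%:~R : R) != 0 by rewrite intr_eq0.
by field; rewrite h1 h2 h3.
Qed.

Lemma Zbounds n (e : rel 'I_n) (c : 'I_n -> rat) (A T : nat) :
  (forall i, rat_bits A (c i)) -> (n.+1 <= 2 ^ T)%N ->
  let Z := (2 ^ ((T + (A + T + A)) * n.+1))%N in
  [/\ (absz (\det (Bm e c)) <= Z)%N, forall i j, (absz (A11 e c i j) <= Z)%N &
      forall j, (absz (A21 e c 0%R j) <= Z)%N].
Proof.
move=> hc hn Z.
have hB := Bm_bound e hc (leq_trans (leqnSn n) hn).
have hf : ((n + 1)`! * (2 ^ (A + T + A)) ^ (n + 1) <= Z)%N.
  apply: (@leq_trans ((2 ^ T) ^ (n + 1) * (2 ^ (A + T + A)) ^ (n + 1))).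
    rewrite leq_mul2r; apply/orP; right.
    apply: (leq_trans (fact_le_pow _)); rewrite leq_exp2r ?addn1 //.
  by rewrite -expnMn -expnD -expnM addn1.
have hadj : forall i j, (absz (\adj (Bm e c) i j) <= Z)%N.
  move=> i j; apply: (leq_trans _ hf); apply: adj_bound => //; exact: expn_gt0.
split.
- exact: (leq_trans (det_bound_nat hB) hf).
- move=> i j; rewrite mxE (_ : usubmx _ i _ = \adj (Bm e c) (lshift 1 i) (lshift 1 j)); [exact: hadj | by rewrite mxE].
- move=> j; rewrite mxE (_ : dsubmx _ 0 _ = \adj (Bm e c) (rshift n 0) (lshift 1 j)); [exact: hadj | by rewrite mxE].
Qed.


Lemma xr_entry (R : realType) n d (c : 'I_n -> rat) (G : 'M[R]_n) (X0 V1 : 'M[rat]_(n, d)) i k :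
  xr c G X0 V1 i k = \sum_j (((i == j)%:R - pivec R c j 0) * ratr (X0 j k)) +
                     \sum_j G i j * ratr (V1 j k).
Proof.
rewrite /xr [LHS]mxE; congr (_ + _); rewrite mxE; apply: eq_bigr => j _.
  rewrite [map_mx _ _ j k]mxE [X in X * _ = _]mxE [X in (_ + X) * _ = _]mxE [X in (X + _) * _ = _]mxE onepiT_entry //.
by rewrite [map_mx _ _ j k]mxE.
Qed.

Lemma fits_of (b E : nat) (z : int) : (absz z <= 2 ^ E)%N -> (E < b)%N -> fits b z.
Proof. by move=> h hE; rewrite /fits; apply: (leq_ltn_trans h); rewrite ltn_exp2l. Qed.

Lemma prod_den_le n d (r : 'I_n * 'I_d -> rat) (p : nat) (P : pred ('I_n * 'I_d)) :
  (forall jk, rat_bits p (r jk)) -> (absz (\prod_(jk | P jk) denq (r jk))%R <= 2 ^ (p * (n * d)))%N.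
Proof.
move=> h; apply: (@leq_trans ((2 ^ p) ^ #|P|)).
  by apply: absz_prod_le => jk; case/andP: (h jk) => _ /ltnW.
rewrite -expnM leq_exp2l // leq_mul2l; apply/orP; right.
by rewrite -[X in (_ <= X * _)%N](card_ord n) -[X in (_ <= _ * X)%N](card_ord d) -card_prod max_card.
Qed.

Unset Implicit Arguments.

Theorem lemma3p12 (a d : nat) :
  exists K : nat,
  forall (R : realType) (n : nat) (e : rel 'I_n) (c : 'I_n -> rat)
         (X0 V1 : 'M[rat]_(n, d)) (p : nat),
    (0 < n)%N ->
    symmetric e -> irreflexive e -> (forall i j, connect e i j) ->
    (forall i, 0 < c i /\ rat_bits (a * (up_log 2 n).+1) (c i)) ->
    (forall i, c i * (deg e i)%:R < 1) ->
    (forall i k, rat_bits p (X0 i k) /\ rat_bits p (V1 i k)) ->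
    exists Gamma : 'M[R]_n,
      (forall i j, (fun t : nat => Gamma_partial R e c t i j) @ \oo --> Gamma i j) /\
      CD_rational (K * (n * (up_log 2 n).+1))
        (fun ij : 'I_n * 'I_n => Gamma ij.1 ij.2) /\
      CD_rational (K * (n * (up_log 2 n).+1 + p * n))
        (fun ik : 'I_n * 'I_d => xr c Gamma X0 V1 ik.1 ik.2).
Proof.
exists (6 * a + 2 * d + 8)%N.
move=> R n e c X0 V1 p n0 hs irr hcon hc hcd hX.
set T := (up_log 2 n).+1.
have hT0 : (0 < T)%N by [].
have hT : (n.+1 <= 2 ^ T)%N.
  have := @up_logP 2 n isT; rewrite /T expnS => h; lia.
have c0 : forall i, 0 < c i by move=> i; case: (hc i).
have hcb : forall i, rat_bits (a * T) (c i) by move=> i; case: (hc i).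
pose i0 := Ordinal n0.
have b0 := @beta_neq0 R n e c i0 hs irr hcon c0 hcd.
have [hZb hZ11 hZ21] := @Zbounds n e c (a * T) T hcb hT.
set Zexp := ((T + (a * T + T + a * T)) * n.+1)%N in hZb hZ11 hZ21.
have hu : forall i, (absz (numq (c i)) <= 2 ^ (a * T))%N by move=> i; case/andP: (hcb i) => /ltnW.
have hv : forall i, (absz (denq (c i)) <= 2 ^ (a * T))%N by move=> i; case/andP: (hcb i) => _ /ltnW.
exists (Gam R e c); split.
  exact: (@Gam_lim R n e c i0 hs irr hcon c0 hcd b0).
split.
  exists (\det (Bm e c)); split => //; split.
    apply: (fits_of (E := Zexp)) => //; rewrite /Zexp; nia.
  move=> [i j] /=; exists (numq (c i) * denq (c j) * A11 e c i j); split; last by rewrite mxE.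
  apply: (fits_of (E := a * T + a * T + Zexp)); last by rewrite /Zexp; nia.
  by rewrite !abszM !expnD; apply: leq_mul; [apply: leq_mul|].
pose rX := fun jk : 'I_n * 'I_d => X0 jk.1 jk.2.
pose rV := fun jk : 'I_n * 'I_d => V1 jk.1 jk.2.
have hrX : forall jk, rat_bits p (rX jk) by move=> [j k]; case: (hX j k).
have hrV : forall jk, rat_bits p (rV jk) by move=> [j k]; case: (hX j k).
pose DX := \prod_jk denq (rX jk).
pose DV := \prod_jk denq (rV jk).
have DX0 : 0 < DX by exact: prod_den_gt0.
have DV0 : 0 < DV by exact: prod_den_gt0.
have hDX : (absz DX <= 2 ^ (p * (n * d)))%N by exact: prod_den_le.
have hDV : (absz DV <= 2 ^ (p * (n * d)))%N by exact: prod_den_le.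
pose xn := fun jk => numq (rX jk) * \prod_(l | l != jk) denq (rX l) * DV.
pose yn := fun jk => numq (rV jk) * \prod_(l | l != jk) denq (rV l) * DX.
have hxr : forall j k, (ratr (X0 j k) : R) = (xn (j, k))%:~R / (DX * DV)%:~R.
  by move=> j k; exact: (@ratr_common R _ rX DV (j, k) (negbT (gt_eqF DV0))).
have hyr : forall j k, (ratr (V1 j k) : R) = (yn (j, k))%:~R / (DX * DV)%:~R.
  by move=> j k; rewrite (mulrC DX); exact: (@ratr_common R _ rV DX (j, k) (negbT (gt_eqF DX0))).
have hxn : forall jk, (absz (xn jk) <= 2 ^ (p + p * (n * d) + p * (n * d)))%N.
  move=> jk; rewrite !abszM !expnD; apply: leq_mul; [apply: leq_mul|] => //.
  - by case/andP: (hrX jk) => /ltnW.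
  - exact: prod_den_le.
have hyn : forall jk, (absz (yn jk) <= 2 ^ (p + p * (n * d) + p * (n * d)))%N.
  move=> jk; rewrite !abszM !expnD; apply: leq_mul; [apply: leq_mul|] => //.
  - by case/andP: (hrV jk) => /ltnW.
  - exact: prod_den_le.
pose term := fun (i : 'I_n) (k : 'I_d) (j : 'I_n) =>
  (((i == j)%:R * \det (Bm e c) - denq (c j) * A21 e c 0 j) * xn (j, k) +
   numq (c i) * denq (c j) * A11 e c i j * yn (j, k)).
exists (\det (Bm e c) * (DX * DV)); split.
  by rewrite mulf_neq0 // mulf_neq0 // gt_eqF.
split.
  apply: (fits_of (E := Zexp + p * (n * d) + p * (n * d))); last by rewrite /Zexp; nia.
  by rewrite !abszM mulnA !expnD; apply: leq_mul; [apply: leq_mul|].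
move=> [i k] /=; exists (\sum_j term i k j); split.
  set u := (2 ^ (a * T))%N in hu hv.
  set Z := (2 ^ Zexp)%N in hZb hZ11 hZ21.
  set X := (2 ^ (p + p * (n * d) + p * (n * d)))%N in hxn hyn.
  have u1 : (1 <= u)%N by rewrite expn_gt0.
  have hterm : forall j, (absz (term i k j) <= 4 * (u * u * Z * X))%N.
    move=> j; rewrite /term; apply: (leq_trans (abszD_le _ _)).
    have h1 : (absz (((i == j)%:R * \det (Bm e c) - denq (c j) * A21 e c 0 j) * xn (j, k))%R
                 <= (Z + u * Z) * X)%N.
      rewrite abszM; apply: leq_mul => //.
      apply: (leq_trans (abszD_le _ _)); rewrite abszN !abszM; apply: leq_add.
        by rewrite natz absz_nat; case: (i == j); rewrite ?mul1n ?mul0n.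
      by apply: leq_mul.
    have h2 : (absz (numq (c i) * denq (c j) * A11 e c i j * yn (j, k))%R <= u * u * Z * X)%N.
      rewrite 3!abszM; apply: leq_mul; [apply: leq_mul; [apply: leq_mul|]|]; [exact: hu | exact: hv | exact: hZ11 | exact: hyn].
    have hw1 : (Z <= u * u * Z)%N by rewrite leq_pmull // muln_gt0 u1.
    have hw2 : (u * Z <= u * u * Z)%N by rewrite -mulnA leq_pmull.
    have h3 := leq_mul (leq_add hw1 hw2) (leqnn X).
    apply: (leq_trans (leq_add h1 h2)); apply: (leq_trans (leq_add h3 (leqnn _))).
    rewrite mulnDl; lia.
  apply: (fits_of (E := T + (2 + (a * T + a * T) + Zexp + (p + p * (n * d) + p * (n * d))))); last first.
    by rewrite /Zexp; nia.
  apply: (leq_trans (absz_sum_le _)).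
  apply: (@leq_trans (\sum_(j < n) 4 * (u * u * Z * X)))%N.
    by apply: leq_sum => j _; exact: hterm.
  rewrite sum_nat_const card_ord [X in (_ <= X)%N]expnD; apply: leq_mul; first exact: ltnW.
  apply: eq_leq; rewrite /u /Z /X !expnD; ring.
rewrite xr_entry.
under eq_bigr => j _ do rewrite -(@G3 R n e c i0 j hs irr c0 b0) hxr.
under [X in _ + X = _]eq_bigr => j _ do rewrite hyr [Gam R e c i j]mxE.
rewrite -big_split /= [X in _ = X / _]rmorph_sum [RHS]mulr_suml; apply: eq_bigr => j _.
have bR : ((\det (Bm e c))%:~R : R) != 0 by rewrite intr_eq0.
have dX : (DX%:~R : R) != 0 by rewrite intr_eq0 gt_eqF.
have dV : (DV%:~R : R) != 0 by rewrite intr_eq0 gt_eqF.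
rewrite /term /lam !(rmorphD, rmorphM, rmorphB) /= rmorph_nat.
by field; rewrite dV dX bR.
Qed.
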